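(* For every $g:E^2\times E^2\to\mathbb R$, $$\log\varphi_1(g)\ge2\log\varphi_0(g).$$
   Context: Let $E$ be a finite set and $P,Q$ irreducible aperiodic stochastic $E\times E$ matrices. For $g:E^2\times E^2\to\mathbb R$, $\varphi_0(g)$ is the spectral radius of the $E^2\times E^2$ matrix $\Phi_0(g)_{(x,y),(x',y')}=\exp(g(x,y,x',y'))P_{x,x'}Q_{y,y'}$ and $\varphi_1(g)$ the spectral radius of the $E^3\times E^3$ matrix $\Phi_1(g)_{(x,y,z),(x',y',z')}=\exp(g(x,y,x',y')+g(x,z,x',z'))P_{x,x'}Q_{y,y'}Q_{z,z'}$. *)

(* Defs.v *)
From mathcomp Require Import all_boot all_algebra.
From mathcomp Require Import classical_sets reals sequences exp.
From mathcomp.real_closed Require Import complex.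

Set Implicit Arguments.
Unset Strict Implicit.
Unset Printing Implicit Defensive.

Import GRing.Theory Num.Theory.
Local Open Scope ring_scope.
Local Open Scope classical_set_scope.

Section Defs.
Variable R : realType.

Fixpoint fpow (T : finType) (A : T -> T -> R) (k : nat) : T -> T -> R :=
  match k with
  | 0 => fun x y => (x == y)%:R
  | k'.+1 => fun x y => \sum_(z : T) fpow A k' x z * A z y
  end.

Definition stochastic (T : finType) (A : T -> T -> R) : Prop :=
  (forall x y, 0 <= A x y) /\ (forall x, \sum_(y : T) A x y = 1).

Definition irreducible (T : finType) (A : T -> T -> R) : Prop :=
  forall x y, exists k : nat, 0 < fpow A k x y.

(* aperiodic: every state has period 1, i.e. the gcd of the return times
   {k >= 1 : A^k x x > 0} is 1 (1 is its only common divisor) *)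
Definition aperiodic (T : finType) (A : T -> T -> R) : Prop :=
  forall x (d : nat),
    (forall k : nat, (0 < k)%N -> 0 < fpow A k x x -> (d %| k)%N) -> d = 1%N.

Definition fmx (T : finType) (A : T -> T -> R) : 'M[R]_#|T| :=
  \matrix_(i, j) A (enum_val i) (enum_val j).

Definition spectral_radius (T : finType) (A : T -> T -> R) : R :=
  sup ((fun z : R[i] => Normc.normc z) @`
         [set z : R[i] | eigenvalue (map_mx (real_complex R) (fmx A)) z]).

Variable E : finType.
Variables P Q : E -> E -> R.

Definition Phi0 (g : E -> E -> E -> E -> R) : (E * E)%type -> (E * E)%type -> R :=
  fun a b => let: (x, y) := a in let: (x', y') := b in
    expR (g x y x' y') * P x x' * Q y y'.

Definition Phi1 (g : E -> E -> E -> E -> R) :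
    (E * E * E)%type -> (E * E * E)%type -> R :=
  fun a b => let: (x, y, z) := a in let: (x', y', z') := b in
    expR (g x y x' y' + g x z x' z') * P x x' * Q y y' * Q z z'.

Definition varphi0 g := spectral_radius (Phi0 g).
Definition varphi1 g := spectral_radius (Phi1 g).

End Defs.

(* Main.v *)
Require Import Defs.
From mathcomp Require Import all_boot all_order all_algebra.
From mathcomp Require Import classical_sets reals sequences exp.
From mathcomp.real_closed Require Import complex.
From mathcomp Require Import spectral mxred.
From mathcomp Require Import ring lra.
Import Order.TTheory GRing.Theory Num.Theory.
Local Open Scope complex_scope.
Local Open Scope ring_scope.

Set Implicit Arguments.
Unset Strict Implicit.
Unset Printing Implicit Defensive.
Section A.
Variable R : realType.
Local Notation C := (R[i]).
Local Notation nc := (@Normc.normc R).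

Lemma nc_ge0 (z : C) : 0 <= nc z.
Proof. by case: z => a b /=; rewrite sqrtr_ge0. Qed.

Lemma ncR (x : R) : nc (x%:C) = `|x|.
Proof. by rewrite /= expr0n /= addr0 sqrtr_sqr. Qed.

Lemma ncD (x y : C) : nc (x + y) <= nc x + nc y.
Proof. exact: (@le_normcD R). Qed.

Lemma ncM (x y : C) : nc (x * y) = nc x * nc y.
Proof. exact: Normc.normcM. Qed.

Lemma ncX (x : C) k : nc (x ^+ k) = nc x ^+ k.
Proof.
elim: k => [|k IH]; first by rewrite !expr0 Normc.normc1.
by rewrite !exprS ncM IH.
Qed.

Lemma nc_sum (I : finType) (F : I -> C) : nc (\sum_i F i) <= \sum_i nc (F i).
Proof.
elim/big_rec2: _ => [|i y1 y2 _ H]; first by rewrite Normc.normc0.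
by apply: le_trans (ncD _ _) _; rewrite lerD2l.
Qed.

Lemma nc_eq0 (z : C) : (nc z == 0) = (z == 0).
Proof.
apply/eqP/eqP => [/Normc.eq0_normc //|->]; exact: Normc.normc0.
Qed.

Local Notation cmx M := (map_mx (real_complex R) M).

Definition mxS N (M : 'M[R]_N) k := \sum_i \sum_j (M ^+ k) i j.

Lemma cmxX N (M : 'M[R]_N) k : cmx (M ^+ k) = (cmx M) ^+ k.
Proof.
elim: k => [|k IH]; first by rewrite !expr0 map_mx1.
by rewrite !exprS -!mulmxE map_mxM IH.
Qed.

Lemma powge0 N (M : 'M[R]_N) : (forall i j, 0 <= M i j) ->
  forall k i j, 0 <= (M ^+ k) i j.
Proof.
move=> M0; elim=> [|k IH] i j; first by rewrite expr0 mxE ler0n.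
rewrite exprS -mulmxE mxE; apply: sumr_ge0 => l _; exact: mulr_ge0.
Qed.

Lemma mxS_ge0 N (M : 'M[R]_N) : (forall i j, 0 <= M i j) -> forall k, 0 <= mxS M k.
Proof.
move=> M0 k; apply: sumr_ge0 => i _; apply: sumr_ge0 => j _; exact: powge0.
Qed.

Lemma ncC N (M : 'M[R]_N) : (forall i j, 0 <= M i j) ->
  forall k i j, nc ((cmx M ^+ k) i j) = (M ^+ k) i j.
Proof.
by move=> M0 k i j; rewrite -cmxX mxE ncR ger0_norm // powge0.
Qed.

Lemma UB N (M : 'M[R]_N) : (forall i j, 0 <= M i j) ->
  forall l, eigenvalue (cmx M) l -> forall k, nc l ^+ k <= mxS M k.
Proof.
move=> M0 l /eigenvalueP [v Hv vN0] k.
have Hk : v *m (cmx M) ^+ k = l ^+ k *: v.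
  elim: k => [|k IH]; first by rewrite expr0 mulmx1 scale1r.
  by rewrite exprSr -mulmxE mulmxA IH -scalemxAl Hv scalerA exprSr.
pose V := \sum_j nc (v 0 j).
have V0 : 0 < V.
  rewrite lt_def sumr_ge0 ?andbT; last by move=> j _; exact: nc_ge0.
  apply/negP => /eqP /psumr_eq0P HV; apply: (negP vN0); apply/eqP/rowP => j.
  rewrite mxE; apply/eqP; rewrite -nc_eq0; apply/eqP; apply: HV => // i _.
  exact: nc_ge0.
rewrite -(ler_pM2l V0).
have -> : V * nc l ^+ k = \sum_j nc ((v *m (cmx M) ^+ k) 0 j).
  rewrite mulr_suml; apply: eq_bigr => j _; rewrite Hk mxE ncM ncX mulrC //.
apply: (@le_trans _ _ (\sum_j \sum_i nc (v 0 i) * (M ^+ k) i j)).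
  apply: ler_sum => j _; rewrite mxE; apply: le_trans (nc_sum _) _.
  by apply: ler_sum => i _; rewrite ncM ncC.
rewrite exchange_big /=.
apply: (@le_trans _ _ (\sum_i nc (v 0 i) * mxS M k)); last by rewrite -mulr_suml.
apply: ler_sum => i _.
rewrite -mulr_sumr; apply: ler_wpM2l; first exact: nc_ge0.
rewrite /mxS [X in _ <= X](bigD1 i) //= lerDl; apply: sumr_ge0 => i0 _.
apply: sumr_ge0 => j _; exact: powge0.
Qed.

Lemma le_sum_ge0 (I : finType) (F : I -> R) i : (forall j, 0 <= F j) ->
  F i <= \sum_j F j.
Proof.
move=> F0; rewrite (bigD1 i) //= lerDl; apply: sumr_ge0 => j _; exact: F0.
Qed.

Lemma trig_bound N (T : 'M[C]_N) (rho r : R) : is_trig_mx T ->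
  (forall i, nc (T i i) <= rho) -> 0 <= rho -> rho < r ->
  exists B, forall k i j, nc ((T ^+ k) i j) <= B * r ^+ k.
Proof.
move=> /is_trig_mxP Ttrig Tdiag rho0 rhor.
have r0 : 0 < r by apply: le_lt_trans rhor.
have rr0 : 0 < r - rho by rewrite subr_gt0.
pose Mt := \sum_i \sum_a nc (T i a).
have Mt0 : 0 <= Mt by apply: sumr_ge0 => i _; apply: sumr_ge0 => a _; exact: nc_ge0.
pose W := Mt / (r - rho) + 1.
have W1 : 1 <= W by rewrite /W lerDr divr_ge0 // ltW.
have W0 : 0 < W by apply: lt_le_trans W1.
have hW : Mt / W <= r - rho.
  rewrite ler_pdivrMr // /W mulrDr mulr1 mulrCA divff ?mulr1 ?lerDl ?ltW //.
  by rewrite gt_eqF.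
pose w (i : 'I_N) := W ^+ i.
have w0 i : 0 <= w i by rewrite /w exprn_ge0 // ltW.
have key i : \sum_a nc (T i a) * w a <= r * w i.
  have tw a : nc (T i a) * w a <= (a == i)%:R * (rho * w i) + nc (T i a) * (w i / W).
    case: (ltngtP a i) => [lt_ai|lt_ia|eq_ai].
    - have -> : (a == i) = false by apply/negbTE; rewrite neq_ltn lt_ai.
      rewrite mul0r add0r; apply: ler_wpM2l; first exact: nc_ge0.
      rewrite ler_pdivlMr // /w -exprSr; exact: ler_weXn2l.
    - rewrite Ttrig // Normc.normc0 !mul0r; apply: addr_ge0; last by [].
      by apply: mulr_ge0 => //; apply: mulr_ge0.
    - have ea : a = i by apply: val_inj.
      rewrite ea eqxx mul1r; apply: ler_wpDr.
        by apply: mulr_ge0; [exact: nc_ge0 | apply: divr_ge0 => //; exact: ltW].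
      by apply: ler_wpM2r => //; exact: Tdiag.
  apply: le_trans (ler_sum _ (fun a _ => tw a)) _.
  rewrite big_split /= (bigD1 i) //= eqxx mul1r big1 ?addr0; last first.
    by move=> a /negbTE ->; rewrite mul0r.
  rewrite -mulr_suml.
  have h1 : (\sum_a nc (T i a)) * (w i / W) <= (r - rho) * w i.
    apply: (@le_trans _ _ (Mt * (w i / W))).
      apply: ler_wpM2r; first by apply: divr_ge0 => //; exact: ltW.
      rewrite /Mt; apply: (@le_sum_ge0 _ (fun i0 => \sum_a nc (T i0 a)) i) => j.
      by apply: sumr_ge0 => a _; exact: nc_ge0.
    by rewrite mulrCA mulrC; apply: ler_wpM2r.
  by apply: le_trans (lerD (lexx _) h1) _; rewrite mulrBl addrCA subrr addr0.
have claim k i : \sum_j nc ((T ^+ k) i j) * w j <= r ^+ k * w i.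
  elim: k i => [|k IH] i.
    rewrite expr0 (bigD1 i) //= big1 ?addr0; last first.
      by move=> j /negbTE ji; rewrite mxE eq_sym ji mulr0n Normc.normc0 mul0r.
    by rewrite mxE eqxx mulr1n Normc.normc1 !mul1r.
  apply: (@le_trans _ _ (\sum_j \sum_a nc (T i a) * nc ((T ^+ k) a j) * w j)).
    apply: ler_sum => j _; rewrite exprS -mulmxE mxE.
    apply: le_trans (ler_wpM2r (w0 j) (nc_sum _)) _; rewrite mulr_suml.
    by apply: ler_sum => a _; rewrite ncM.
  rewrite exchange_big /=.
  apply: (@le_trans _ _ (\sum_a nc (T i a) * (r ^+ k * w a))).
    apply: ler_sum => a _; under eq_bigr do rewrite -mulrA.
    by rewrite -mulr_sumr; exact: (ler_wpM2l (nc_ge0 _) (IH a)).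
  rewrite (eq_bigr (fun a => r ^+ k * (nc (T i a) * w a))); last first.
    by move=> a _; rewrite mulrCA.
  rewrite -mulr_sumr exprSr -mulrA; apply: ler_wpM2l; first by rewrite exprn_ge0 // ltW.
  exact: key.
exists (W ^+ N) => k i j.
apply: (@le_trans _ _ (nc ((T ^+ k) i j) * w j)).
  by rewrite ler_peMr ?nc_ge0 // /w exprn_ege1.
apply: (@le_trans _ _ (\sum_j0 nc ((T ^+ k) i j0) * w j0)).
  apply: (@le_sum_ge0 _ (fun j0 => nc ((T ^+ k) i j0) * w j0) j) => j0.
  by apply: mulr_ge0 => //; exact: nc_ge0.
apply: le_trans (claim k i) _; rewrite mulrC; apply: ler_wpM2r; first by rewrite exprn_ge0 // ltW.
by rewrite /w; apply: ler_weXn2l => //; exact: ltnW.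
Qed.

Lemma bernoulli (q : R) k : 1 <= q -> 1 + k%:R * (q - 1) <= q ^+ k.
Proof.
move=> q1; elim: k => [|k IH]; first by rewrite mul0r addr0 expr0.
rewrite exprS.
have k0 : 0 <= k%:R :> R by rewrite ler0n.
have h : q * (1 + k%:R * (q - 1)) <= q * q ^+ k.
  by apply: ler_wpM2l => //; apply: le_trans q1.
apply: le_trans h; rewrite -natr1.
have hq : 0 <= q - 1 by rewrite subr_ge0.
have h2 : 0 <= k%:R * ((q - 1) * (q - 1)) by apply: mulr_ge0 => //; apply: mulr_ge0.
nra.
Qed.

Lemma geom_contra (c r K : R) : 0 < r -> r < c ->
  ~ (forall k, c ^+ k <= K * r ^+ k).
Proof.
move=> r0 rc H.
pose q := c / r.
have q1 : 1 < q by rewrite /q ltr_pdivlMr // mul1r.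
have qk k : q ^+ k <= `|K|.
  rewrite /q expr_div_n ler_pdivrMr ?exprn_gt0 //.
  apply: le_trans (H k) _; apply: ler_wpM2r; first by rewrite exprn_ge0 // ltW.
  exact: ler_norm.
have q10 : 0 < q - 1 by rewrite subr_gt0.
pose x := `|K| / (q - 1).
have x0 : 0 <= x by rewrite /x divr_ge0 // ltW.
have := archi_boundP x0; set k := Num.Def.archi_bound x => hk.
have := qk k; apply/negP; rewrite -ltNge.
apply: lt_le_trans (bernoulli k (ltW q1)).
have : `|K| < k%:R * (q - 1) by rewrite -ltr_pdivrMr.
move=> h; apply: lt_le_trans h _; rewrite lerDr //.
Qed.

Lemma conjX N (U T : 'M[C]_N) k : U \in unitmx ->
  (invmx U *m T *m U) ^+ k = invmx U *m T ^+ k *m U.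
Proof.
move=> Uu; elim: k => [|k IH]; first by rewrite !expr0 mulmx1 mulVmx.
rewrite exprS IH -!mulmxE !mulmxA; congr (_ *m _).
by rewrite -[_ *m U *m invmx U]mulmxA mulmxV // mulmx1 exprS -mulmxE mulmxA.
Qed.

Lemma le_sum2 (I J : finType) (F : I -> J -> R) i j :
  (forall i j, 0 <= F i j) -> F i j <= \sum_i \sum_j F i j.
Proof.
move=> F0; apply: (@le_trans _ _ (\sum_j F i j)); first exact: le_sum_ge0.
apply: (@le_sum_ge0 _ (fun i => \sum_j F i j) i) => i'.
by apply: sumr_ge0 => j' _.
Qed.

Lemma LB N (M : 'M[R]_N) : (0 < N)%N -> (forall i j, 0 <= M i j) ->
  exists l, eigenvalue (cmx M) l /\
    forall c K, 0 <= c -> (forall k, c ^+ k <= K * mxS M k) -> c <= nc l.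
Proof.
move=> N0 M0.
have [U Uun] := Schur (cmx M) N0.
have Uu : U \in unitmx := unitarymx_unit Uun.
rewrite /similar_to conjumx // => Ttrig.
set T := U *m cmx M *m invmx U in Ttrig.
have MT : cmx M = invmx U *m T *m U by rewrite /T -mulmxA mulmxKV // mulKmx.
case: (@real_arg_maxP R 'I_N (Ordinal N0) xpredT (fun i => nc (T i i)) isT).
  by move=> i _; exact: ger0_real (nc_ge0 _).
move=> i0 _ Hi0.
exists (T i0 i0); split.
  have eT : eigenvalue T (T i0 i0).
    rewrite eigenvalue_root_char char_poly_trig // rootE horner_prod (bigD1 i0) //=.
    by rewrite hornerXsubC subrr mul0r.
  move/eigenvalueP: eT => [v Hv vN0]; apply/eigenvalueP; exists (v *m U).
    have -> : v *m U *m cmx M = v *m T *m U by rewrite /T !mulmxA mulmxKV.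
    by rewrite Hv -scalemxAl.
  apply: contra vN0 => /eqP h; apply/eqP.
  by rewrite -(mulmxK Uu v) h mul0mx.
move=> c K c0 Hc.
case: (leP c (nc (T i0 i0))) => // lt.
pose r := (nc (T i0 i0) + c) / 2.
have [h1 h2] := midf_lt lt.
have r0 : 0 < r by apply: le_lt_trans (nc_ge0 _) h1.
have [B HB] := @trig_bound N T (nc (T i0 i0)) r Ttrig (fun i => Hi0 i isT) (nc_ge0 _) h1.
have B0 : 0 <= B.
  have := HB 0%N i0 i0; rewrite expr0 mulr1; apply: le_trans; exact: nc_ge0.
pose sUi := \sum_i \sum_a nc (invmx U i a).
pose sU := \sum_b \sum_j nc (U b j).
have sUi0 : 0 <= sUi by apply: sumr_ge0 => i _; apply: sumr_ge0 => a _; exact: nc_ge0.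
have sU0 : 0 <= sU by apply: sumr_ge0 => i _; apply: sumr_ge0 => a _; exact: nc_ge0.
pose K2 := (sUi * B * sU) *+ N *+ N.
have entry k i j : (M ^+ k) i j <= K2 * r ^+ k.
  rewrite -(ncC M0) MT conjX // mxE; apply: le_trans (nc_sum _) _.
  apply: (@le_trans _ _ (\sum_(b < N) \sum_(a < N) sUi * (B * r ^+ k) * sU)).
    apply: ler_sum => b _; rewrite mxE ncM.
    apply: le_trans (ler_wpM2r (nc_ge0 _) (nc_sum _)) _; rewrite mulr_suml.
    apply: ler_sum => a _; rewrite ncM.
    apply: ler_pM; [by apply: mulr_ge0; exact: nc_ge0 | exact: nc_ge0 | |].
      apply: ler_pM; [exact: nc_ge0 | exact: nc_ge0 | | exact: HB].
      exact: (@le_sum2 _ _ (fun i a => nc (invmx U i a)) _ _ (fun _ _ => nc_ge0 _)).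
    exact: (@le_sum2 _ _ (fun b j => nc (U b j)) _ _ (fun _ _ => nc_ge0 _)).
  rewrite !sumr_const !card_ord.
  have -> : sUi * (B * r ^+ k) * sU = sUi * B * sU * r ^+ k by ring.
  by rewrite /K2 !mulrnAl.
have Sbound k : mxS M k <= (K2 *+ N *+ N) * r ^+ k.
  rewrite /mxS; apply: (@le_trans _ _ (\sum_(i < N) \sum_(j < N) K2 * r ^+ k)).
    by apply: ler_sum => i _; apply: ler_sum => j _; exact: entry.
  by rewrite !sumr_const !card_ord !mulrnAl.
exfalso; apply: (@geom_contra c r (`|K| * (K2 *+ N *+ N)) r0 h2) => k.
apply: le_trans (Hc k) _.
apply: (@le_trans _ _ (`|K| * mxS M k)).
  by apply: ler_wpM2r; [exact: mxS_ge0 | exact: ler_norm].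
by rewrite -mulrA; apply: ler_wpM2l; [exact: normr_ge0 | exact: Sbound].
Qed.

Fixpoint rs (T : finType) (A : T -> T -> R) k : T -> R :=
  match k with
  | 0 => fun _ => 1
  | k'.+1 => fun a => \sum_b A a b * rs A k' b
  end.

Lemma sum_enum (T : finType) (F : T -> R) :
  \sum_(i < #|T|) F (enum_val i) = \sum_b F b.
Proof. by rewrite -big_enum_val. Qed.

Lemma rowsum_fmx (T : finType) (A : T -> T -> R) k i :
  \sum_j (fmx A ^+ k) i j = rs A k (enum_val i).
Proof.
elim: k i => [|k IH] i.
  rewrite expr0 (bigD1 i) //= big1 ?addr0; last first.
    by move=> j /negbTE ji; rewrite mxE eq_sym ji mulr0n.
  by rewrite mxE eqxx mulr1n.
rewrite exprS -mulmxE /=.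
under eq_bigr do rewrite mxE.
rewrite exchange_big /= -[RHS]sum_enum; apply: eq_bigr => l _.
by rewrite -mulr_sumr IH mxE.
Qed.

Lemma mxS_fmx (T : finType) (A : T -> T -> R) k :
  mxS (fmx A) k = \sum_a rs A k a.
Proof.
by rewrite /mxS -sum_enum; apply: eq_bigr => i _; rewrite rowsum_fmx.
Qed.

Lemma fmx_ge0 (T : finType) (A : T -> T -> R) : (forall a b, 0 <= A a b) ->
  forall i j, 0 <= fmx A i j.
Proof. by move=> A0 i j; rewrite mxE. Qed.

Lemma jensen (I : finType) (p u : I -> R) : (forall i, 0 <= p i) ->
  \sum_i p i = 1 -> (\sum_i p i * u i) ^+ 2 <= \sum_i p i * u i ^+ 2.
Proof.
move=> p0 p1; set m := \sum_i p i * u i.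
have : 0 <= \sum_i p i * (u i - m) ^+ 2.
  by apply: sumr_ge0 => i _; apply: mulr_ge0 => //; exact: sqr_ge0.
have -> : \sum_i p i * (u i - m) ^+ 2 =
    \sum_i p i * u i ^+ 2 - (m *+ 2) * (\sum_i p i * u i) + m ^+ 2 * \sum_i p i.
  rewrite mulr_sumr mulr_sumr -sumrB -big_split /=; apply: eq_bigr => i _; ring.
rewrite p1 -/m mulr1; lra.
Qed.

Lemma bilin (I J : finType) (c : I -> R) (a : I -> J -> R) (H : J -> J -> R) :
  \sum_y \sum_z c y * c z * (\sum_y' \sum_z' a y y' * a z z' * H y' z') =
  \sum_y' \sum_z' (\sum_y c y * a y y') * (\sum_z c z * a z z') * H y' z'.
Proof.
transitivity (\sum_y \sum_z \sum_y' \sum_z' c y * c z * (a y y' * a z z' * H y' z')).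
  apply: eq_bigr => y _; apply: eq_bigr => z _; rewrite mulr_sumr.
  by apply: eq_bigr => y' _; rewrite mulr_sumr.
transitivity (\sum_y' \sum_z' \sum_y \sum_z c y * c z * (a y y' * a z z' * H y' z')).
  under eq_bigr do rewrite exchange_big.
  under eq_bigr do under eq_bigr do rewrite exchange_big.
  rewrite exchange_big; apply: eq_bigr => y' _.
  by rewrite exchange_big.
apply: eq_bigr => y' _; apply: eq_bigr => z' _.
rewrite mulr_suml mulr_suml; apply: eq_bigr => y _.
rewrite mulr_sumr mulr_suml; apply: eq_bigr => z _; ring.
Qed.

Lemma lin (I J : finType) (c : I -> R) (a : I -> J -> R) (H : J -> R) :
  \sum_y c y * (\sum_y' a y y' * H y') = \sum_y' (\sum_y c y * a y y') * H y'.
Proof.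
under eq_bigr do rewrite mulr_sumr.
rewrite exchange_big; apply: eq_bigr => y' _; rewrite mulr_suml.
by apply: eq_bigr => y _; rewrite mulrA.
Qed.

Lemma lin2 (I J : finType) (d : J -> J -> R) (p : I -> R) (G : I -> J -> J -> R) :
  \sum_y \sum_z d y z * (\sum_x' p x' * G x' y z) =
  \sum_x' p x' * \sum_y \sum_z d y z * G x' y z.
Proof.
transitivity (\sum_y \sum_x' \sum_z d y z * (p x' * G x' y z)).
  apply: eq_bigr => y _; rewrite exchange_big /=.
  by apply: eq_bigr => z _; rewrite mulr_sumr.
rewrite exchange_big; apply: eq_bigr => x' _; rewrite mulr_sumr.
apply: eq_bigr => y _; rewrite mulr_sumr; apply: eq_bigr => z _; ring.
Qed.

Section Phi.
Variable E : finType.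
Variables P Q : E -> E -> R.
Variable g : E -> E -> E -> E -> R.
Hypothesis hPs : stochastic P.
Hypothesis hQs : stochastic Q.

Let f n x y := rs (Phi0 P Q g) n (x, y).
Let h n x y z := rs (Phi1 P Q g) n (x, y, z).
Let a x x' y y' := expR (g x y x' y') * Q y y'.

Lemma f_S n x y : f n.+1 x y = \sum_x' P x x' * \sum_y' a x x' y y' * f n x' y'.
Proof.
rewrite /f /=.
transitivity (\sum_x' \sum_y' P x x' * (a x x' y y' * rs (Phi0 P Q g) n (x', y'))).
  by rewrite pair_bigA; apply: eq_bigr => -[x' y'] _ /=; rewrite /a; ring.
by apply: eq_bigr => x' _; rewrite mulr_sumr.
Qed.

Lemma h_S n x y z : h n.+1 x y z = \sum_x' P x x' *
   \sum_y' \sum_z' a x x' y y' * a x x' z z' * h n x' y' z'.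
Proof.
rewrite /h /=.
transitivity (\sum_x' \sum_y' \sum_z' P x x' * (a x x' y y' * a x x' z z' *
    rs (Phi1 P Q g) n (x', y', z'))).
  rewrite pair_bigA pair_bigA; apply: eq_bigr => -[[x' y'] z'] _ /=.
  by rewrite /a expRD; ring.
apply: eq_bigr => x' _; rewrite mulr_sumr; apply: eq_bigr => y' _.
by rewrite mulr_sumr.
Qed.

Lemma quad n x (c : E -> R) :
  (\sum_y c y * f n x y) ^+ 2 <= \sum_y \sum_z c y * c z * h n x y z.
Proof.
elim: n x c => [|n IH] x c.
  rewrite /f /h /=; under eq_bigr do rewrite mulr1.
  under [X in _ <= X]eq_bigr do under eq_bigr do rewrite mulr1.
  rewrite expr2 mulr_suml le_eqVlt; apply/orP; left; apply/eqP.
  by apply: eq_bigr => y _; rewrite mulr_sumr.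
pose cp x' y' := \sum_y c y * a x x' y y'.
have e1 : \sum_y c y * f n.+1 x y =
    \sum_x' P x x' * \sum_y' cp x' y' * f n x' y'.
  transitivity (\sum_x' \sum_y c y * (P x x' * \sum_y' a x x' y y' * f n x' y')).
    under eq_bigr do rewrite f_S mulr_sumr.
    exact: exchange_big.
  apply: eq_bigr => x' _.
  transitivity (P x x' * \sum_y c y * \sum_y' a x x' y y' * f n x' y').
    by rewrite mulr_sumr; apply: eq_bigr => y _; rewrite mulrCA.
  by rewrite lin.
have e2 : \sum_y \sum_z c y * c z * h n.+1 x y z =
    \sum_x' P x x' * \sum_y' \sum_z' cp x' y' * cp x' z' * h n x' y' z'.
  under eq_bigr do under eq_bigr do rewrite h_S.
  rewrite (lin2 (fun y z => c y * c z) (P x)).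
  apply: eq_bigr => x' _; congr (_ * _).
  exact: (bilin c (a x x') (h n x')).
rewrite e1 e2.
have P0 x' : 0 <= P x x' by case: hPs.
have P1 : \sum_x' P x x' = 1 by case: hPs.
apply: le_trans (jensen _ P0 P1) _.
by apply: ler_sum => x' _; apply: ler_wpM2l => //; exact: IH.
Qed.

Lemma sum0_pair n : \sum_a rs (Phi0 P Q g) n a = \sum_x \sum_y f n x y.
Proof. by rewrite pair_bigA; apply: eq_bigr => -[x y]. Qed.

Lemma sum1_pair n : \sum_a rs (Phi1 P Q g) n a = \sum_x \sum_y \sum_z h n x y z.
Proof. by rewrite pair_bigA pair_bigA; apply: eq_bigr => -[[x y] z]. Qed.

Lemma S_ineq (e : E) n : mxS (fmx (Phi0 P Q g)) n ^+ 2 <=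
   #|E|%:R * mxS (fmx (Phi1 P Q g)) n.
Proof.
rewrite !mxS_fmx sum0_pair sum1_pair.
pose u x := \sum_y f n x y.
have k0 : 0 < #|E|%:R :> R by rewrite ltr0n; apply/card_gt0P; exists e.
set k := #|E|%:R : R.
pose w := k^-1.
have hkw : k * w = 1 by rewrite /w divff // gt_eqF.
have w0 : 0 <= w by rewrite /w invr_ge0 ltW.
have J : (\sum_x w * u x) ^+ 2 <= \sum_x w * u x ^+ 2.
  apply: jensen => //; rewrite sumr_const -mulr_natr mulrC; exact: hkw.
rewrite -mulr_sumr -mulr_sumr in J.
have hq x : u x ^+ 2 <= \sum_y \sum_z h n x y z.
  have := quad n x (fun _ => 1).
  under eq_bigr do rewrite mul1r.
  by under [X in _ <= X -> _]eq_bigr do under eq_bigr do rewrite !mul1r.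
have hs : \sum_x u x ^+ 2 <= \sum_x \sum_y \sum_z h n x y z by apply: ler_sum.
set s := \sum_x u x in J *.
set t := \sum_x u x ^+ 2 in J hs.
apply: (@le_trans _ _ (k * t)); last by apply: ler_wpM2l => //; exact: ltW.
have -> : s ^+ 2 = k ^+ 2 * (w * s) ^+ 2.
  by rewrite exprMn mulrA -exprMn hkw expr1n mul1r.
have -> : k * t = k ^+ 2 * (w * t) by rewrite mulrA expr2 -(mulrA k) hkw mulr1.
by apply: ler_wpM2l => //; rewrite exprn_ge0 // ltW.
Qed.

Lemma f_lb : exists2 m, 0 < m & forall n x y, m ^+ n <= f n x y.
Proof.
pose B := \sum_x \sum_y \sum_x' \sum_y' `|g x y x' y'|.
exists (expR (- B)); first exact: expR_gt0.
have hm x y x' y' : expR (- B) <= expR (g x y x' y').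
  rewrite ler_expR; apply: lerNnormlW.
  apply: le_trans (@le_sum2 _ _ (fun x y => \sum_x' \sum_y' `|g x y x' y'|) x y _) => //.
    exact: (@le_sum2 _ _ (fun x' y' => `|g x y x' y'|) x' y' (fun _ _ => normr_ge0 _)).
  by move=> i j; apply: sumr_ge0 => i' _; apply: sumr_ge0 => j' _; exact: normr_ge0.
have P0 x x' : 0 <= P x x' by case: hPs.
have P1 x : \sum_x' P x x' = 1 by case: hPs.
have Q0 x x' : 0 <= Q x x' by case: hQs.
have Q1 x : \sum_x' Q x x' = 1 by case: hQs.
elim=> [|n IH] x y; first by rewrite expr0 /f /=.
rewrite f_S.
apply: (@le_trans _ _ (\sum_x' P x x' * \sum_y' (expR (- B) * Q y y') * expR (- B) ^+ n)).
  under eq_bigr do rewrite -mulr_suml -mulr_sumr Q1 mulr1.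
  by rewrite -mulr_suml P1 mul1r exprS.
apply: ler_sum => x' _; apply: ler_wpM2l => //; apply: ler_sum => y' _.
apply: ler_pM => //.
- by apply: mulr_ge0 => //; exact: ltW (expR_gt0 _).
- by rewrite exprn_ge0 // ltW // expR_gt0.
- by rewrite /a; apply: ler_wpM2r.
Qed.

End Phi.

Lemma sr_empty (T : finType) (A : T -> T -> R) : (T -> False) ->
  spectral_radius A = 0.
Proof.
move=> hT; rewrite /spectral_radius.
have -> : [set z : C | eigenvalue (cmx (fmx A)) z]%classic = classical_sets.set0.
  apply/seteqP; split => // z /= /eigenvalueP [v _ vN0].
  move/negP: vN0; apply; apply/eqP/rowP => j; case: (hT (enum_val j)).
by rewrite image_set0 sup0.
Qed.

Lemma sr_facts (T : finType) (A : T -> T -> R) (t : T) :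
  (forall a b, 0 <= A a b) ->
  let S := ((fun z : C => nc z) @` [set z : C | eigenvalue (cmx (fmx A)) z])%classic in
  has_ubound S /\ exists2 l, eigenvalue (cmx (fmx A)) l &
    (nc l <= sup S /\
     forall c K, 0 <= c -> (forall k, c ^+ k <= K * mxS (fmx A) k) -> c <= nc l).
Proof.
move=> A0 S.
have M0 := fmx_ge0 A0.
have N0 : (0 < #|T|)%N by apply/card_gt0P; exists t.
have hs : has_ubound S.
  exists (mxS (fmx A) 1) => _ [z Hz <-]; have := UB M0 Hz 1; rewrite expr1 //.
split => //.
have [l [el Hl]] := LB N0 M0.
exists l => //; split => //.
by move/ubP: (ub_le_sup hs) => H; apply: H; exists l.
Qed.

End A.

Theorem mainTheorem5 (R : realType) (E : finType) (P Q : E -> E -> R)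
  (hPs : stochastic P) (hPi : irreducible P) (hPa : aperiodic P)
  (hQs : stochastic Q) (hQi : irreducible Q) (hQa : aperiodic Q)
  (g : E -> E -> E -> E -> R) :
  2 * ln (varphi0 P Q g) <= ln (varphi1 P Q g).
Proof.
case: (pickP (@predT E)) => [e _ | E0]; last first.
  rewrite /varphi0 /varphi1 !sr_empty; first by rewrite ln0 // mulr0.
    by move=> [[x _] _]; have := E0 x.
  by move=> [x _]; have := E0 x.
have P0 x x' : 0 <= P x x' by case: hPs.
have Q0 x x' : 0 <= Q x x' by case: hQs.
have A0 : forall a b, 0 <= Phi0 P Q g a b.
  move=> [x y] [x' y'] /=; apply: mulr_ge0 => //; apply: mulr_ge0 => //.
  exact: expR_ge0.
have A1 : forall a b, 0 <= Phi1 P Q g a b.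
  move=> [[x y] z] [[x' y'] z'] /=; apply: mulr_ge0 => //; apply: mulr_ge0 => //.
  apply: mulr_ge0 => //; exact: expR_ge0.
have [hs0 [l0 el0 [l0S Hl0]]] := sr_facts (e, e) A0.
have [hs1 [l1 el1 [l1S Hl1]]] := sr_facts (e, e, e) A1.
rewrite /varphi0 /varphi1 /spectral_radius.
set S0 := ((fun z => _) @` _)%classic in hs0 l0S *.
set S1 := ((fun z => _) @` _)%classic in hs1 l1S *.
have [m m0 Hm] := f_lb (P:=P) (Q:=Q) g hPs hQs.
have ml0 : m <= Normc.normc l0.
  apply: (Hl0 m 1 (ltW m0)) => k; rewrite mul1r mxS_fmx.
  apply: le_trans (Hm k e e) _.
  apply: (@le_sum_ge0 R _ (fun a => rs (Phi0 P Q g) k a) (e, e)) => -[x y].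
  by apply: le_trans (Hm k x y); rewrite exprn_ge0 // ltW.
have sup0_pos : 0 < sup S0 by apply: lt_le_trans m0 (le_trans ml0 l0S).
have sup1_ge0 : 0 <= sup S1 by apply: le_trans (nc_ge0 _) l1S.
have bound z : eigenvalue (map_mx (real_complex R) (fmx (Phi0 P Q g))) z ->
    Normc.normc z ^+ 2 <= sup S1.
  move=> ez; apply: le_trans l1S.
  apply: (Hl1 _ #|E|%:R); first by rewrite exprn_ge0 // nc_ge0.
  move=> k; rewrite exprAC.
  apply: le_trans (S_ineq (P:=P) Q g hPs e k).
  have h := UB (fmx_ge0 A0) ez k.
  have hz0 : 0 <= Normc.normc z ^+ k by rewrite exprn_ge0 // nc_ge0.
  rewrite !expr2; apply: ler_pM; [exact: hz0 | exact: hz0 | exact: h | exact: h].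
have hsq : sup S0 <= Num.sqrt (sup S1).
  apply: ge_sup; first by exists (Normc.normc l0), l0.
  move=> _ [z ez <-].
  rewrite -(ger0_norm (nc_ge0 z)) -sqrtr_sqr.
  exact: ler_wsqrtr (bound z ez).
have sq : sup S0 ^+ 2 <= sup S1.
  rewrite -(sqr_sqrtr sup1_ge0) !expr2.
  have s0 := ltW sup0_pos.
  apply: ler_pM; [exact: s0 | exact: s0 | exact: hsq | exact: hsq].
have -> : 2 * ln (sup S0) = ln (sup S0 ^+ 2) by rewrite lnXn // mulr_natl.
rewrite ler_ln // posrE.
  by rewrite exprn_gt0.
by apply: lt_le_trans sq; rewrite exprn_gt0.
Qed.
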